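(* $21 \le R_3(L) \le 2593$. In particular, there exists a coloring of $[20]\times[20]$ with 3 colors containing no monochromatic $L$, i.e. no integers $i,j$ and $t\ge 1$ with $(i,j),(i,j+t),(i+t,j+t)\in[20]\times[20]$ all of the same color.
   Context: For $n\in\mathbb{N}$, $[n]=\{1,\dots,n\}$. An $L$ in the grid $[n]\times[n]$ is a set of three lattice points of the form $\{(i,j),(i,j+t),(i+t,j+t)\}$ with $t$ a positive integer. A $c$-coloring of the grid is a function $[n]\times[n]\to[c]$. $R_c(L)$ denotes the least $n$ such that every $c$-coloring of $[n]\times[n]$ contains a monochromatic $L$. *)

(* Defs.v *)
From mathcomp Require Import all_boot.
Set Implicit Arguments. Unset Strict Implicit. Unset Printing Implicit Defensive.

(* A c-coloring of the grid [n]x[n] (with [n] = {1,...,n}) is represented by a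
   function nat -> nat -> 'I_c; only its values on [n]x[n] matter. *)
Definition coloring (c : nat) := nat -> nat -> 'I_c.

Definition L_in_grid (n i j t : nat) : Prop :=
  [/\ 1 <= i, 1 <= j, 0 < t, i + t <= n & j + t <= n].

Definition has_mono_L (c n : nat) (f : coloring c) : Prop :=
  exists i j t, L_in_grid n i j t /\ f i j = f i (j + t) /\ f i (j + t) = f (i + t) (j + t).

Definition arrows_L (c n : nat) : Prop := forall f : coloring c, has_mono_L n f.

Definition is_RcL (c r : nat) : Prop :=
  arrows_L c r /\ forall m, m < r -> ~ arrows_L c m.

(* Main.v *)
Require Import Defs.
From mathcomp Require Import all_boot zify.
From Stdlib Require Import Classical.
Set Implicit Arguments. Unset Strict Implicit. Unset Printing Implicit Defensive.

Lemma inj_le (T T' : finType) (A : {set T}) (B : {set T'}) (h : T -> T') :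
  {in A &, injective h} -> (forall x, x \in A -> h x \in B) -> #|A| <= #|B|.
Proof.
move=> hi hB; rewrite -(card_in_imset hi); apply: subset_leq_card.
by apply/subsetP => y /imsetP [x xA ->]; exact: hB.
Qed.

Definition ltp n (A : {set 'I_n}) :=
  [set p : 'I_n * 'I_n | [&& p.1 \in A, p.2 \in A & p.1 < p.2]].

Lemma ltpairs_ge n (A : {set 'I_n}) : #|A| * #|A| <= 2 * #|ltp A| + #|A|.
Proof.
set G := [set p : 'I_n * 'I_n | [&& p.1 \in A, p.2 \in A & p.2 < p.1]].
set E := [set p : 'I_n * 'I_n | (p.1 \in A) && (p.1 == p.2)].
have h1 : #|setX A A| <= #|ltp A| + #|G| + #|E|.
  apply: (leq_trans _ (leq_add (leq_card_setU _ _).1 (leqnn _))).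
  apply: (leq_trans _ (leq_card_setU _ _).1).
  apply: subset_leq_card; apply/subsetP => -[a b]; rewrite !inE /= => /andP[aA bA].
  rewrite aA bA /=; case: (ltngtP a b) => //= e.
  by apply/eqP; apply: val_inj.
have h2 : #|G| <= #|ltp A|.
  apply: (inj_le (h := fun p => (p.2, p.1))).
    by move=> [a b] [c d] _ _ [-> ->].
  by move=> [a b]; rewrite !inE /= => /and3P[-> -> ->].
have h3 : #|E| <= #|A|.
  apply: (inj_le (h := fun p => p.1)).
    move=> [a b] [c d]; rewrite !inE /= => /andP[_ /eqP <-] /andP[_ /eqP <-] -> //.
  by move=> [a b]; rewrite !inE /= => /andP[].
rewrite cardsX in h1; lia.
Qed.

Definition sidon n (A : {set 'I_n}) := forall a b c e : 'I_n,
  a \in A -> b \in A -> c \in A -> e \in A ->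
  a < b -> c < e -> a < c -> b - a = e - c -> False.

Definition dif n (p : 'I_n * 'I_n) : 'I_n :=
  Ordinal (leq_ltn_trans (leq_subr p.1 p.2) (ltn_ord p.2)).

Lemma sidon_ltp n (A : {set 'I_n}) : sidon A -> #|ltp A| <= n.
Proof.
move=> S; apply: (@leq_trans #|[set: 'I_n]|); last by rewrite cardsT card_ord.
apply: (inj_le (h := @dif n)); last by move=> *; rewrite inE.
move=> [a b] [c e]; rewrite !inE /= => /and3P[aA bA ab] /and3P[cA eA ce] E.
have E' : b - a = e - c by move: E => /(congr1 val).
case: (ltngtP a c) => h.
- by case: (S a b c e).
- by case: (S c e a b) => //; rewrite E'.
- have ac : a = c by apply: ord_inj.
  have be : b = e by apply: ord_inj; move: E' h; lia.
  by rewrite ac be.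
Qed.

Lemma sidon_card n (A : {set 'I_n}) : sidon A -> n <= 2593 -> #|A| <= 72.
Proof.
move=> /sidon_ltp h hn; have := ltpairs_ge A; nia.
Qed.
Lemma three_col (x y u v : 'I_3) :
  u <> v -> x <> u -> x <> v -> y <> x -> y <> u -> y <> v -> False.
Proof.
have V : forall a b : 'I_3, a <> b -> nat_of_ord a <> nat_of_ord b.
  by move=> a b ne E; apply: ne; apply: val_inj.
move=> /V ? /V ? /V ? /V ? /V ? /V ?.
have := ltn_ord x; have := ltn_ord y; have := ltn_ord u; have := ltn_ord v.
lia.
Qed.
Definition noL n (f : coloring 3) := forall i j t, L_in_grid n i j t ->
  f i j = f i (j+t) -> f i (j+t) = f (i+t) (j+t) -> False.

Lemma noL' n f : noL n f -> forall i j t j' i' j'', L_in_grid n i j t ->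
  j' = j + t -> i' = i + t -> j'' = j + t ->
  f i j = f i j' -> f i j' = f i' j'' -> False.
Proof. move=> H i j t j' i' j'' G -> -> ->; exact: H. Qed.

Lemma core n f (H : noL n f) A d w z c1 cs :
  1 <= A -> 0 < d -> 0 < w -> 0 < z -> A + z + w + d <= n ->
  f 1 A = c1 -> f 1 (A + d) = c1 -> f 1 (A + d + w) = c1 ->
  f 1 (A + z) = c1 -> f 1 (A + z + d + w) = c1 ->
  f (1 + d) (A + d) = cs -> f (1 + d) (A + d + w) = cs ->
  f (1 + d) (A + z + d) = cs -> f (1 + d) (A + z + d + w) = cs -> False.
Proof.
move=> hA hd hw hz hn e1 e2 e3 e4 e5 e6 e7 e8 e9.
have H' := @noL' n f H.
have ne1 : cs <> c1.
  move=> E; apply: (H' 1 A d (A+d) (1+d) (A+d)) => //; first by split; lia.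
  by rewrite e1 e2. by rewrite e2 e6.
set X1 := f (1+d+w) (A+d+w).
have x1a : X1 <> cs.
  move=> E; apply: (H' (1+d) (A+d) w (A+d+w) (1+d+w) (A+d+w)) => //; first by split; lia.
  by rewrite e6 e7. by rewrite e7 -E.
have x1b : X1 <> c1.
  move=> E; apply: (H' 1 A (d+w) (A+d+w) (1+d+w) (A+d+w)); try lia; first by split; lia.
  by rewrite e1 e3. by rewrite e3 -E.
set X2 := f (1+d+w) (A+z+d+w).
have x2a : X2 <> cs.
  move=> E; apply: (H' (1+d) (A+z+d) w (A+z+d+w) (1+d+w) (A+z+d+w)) => //; first by split; lia.
  by rewrite e8 e9. by rewrite e9 -E.
have x2b : X2 <> c1.
  move=> E; apply: (H' 1 (A+z) (d+w) (A+z+d+w) (1+d+w) (A+z+d+w)); try lia; first by split; lia.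
  by rewrite e4 e5. by rewrite e5 -E.
have x12 : X1 = X2.
  case: (X1 =P X2) => // ne.
  exfalso; apply: (@three_col X1 X2 cs c1) => // E; apply: ne; by rewrite E.
set Y := f (1+d+w+z) (A+z+d+w).
have ya : Y <> X1.
  move=> E; apply: (H' (1+d+w) (A+d+w) z (A+z+d+w) (1+d+w+z) (A+z+d+w)); try lia; first by split; lia.
  by rewrite -/X1 x12. by rewrite -/X2 -x12 -E.
have yb : Y <> cs.
  move=> E; apply: (H' (1+d) (A+d) (w+z) (A+z+d+w) (1+d+w+z) (A+z+d+w)); try lia; first by split; lia.
  by rewrite e6 e9. by rewrite e9 -E.
have yc : Y <> c1.
  move=> E; apply: (H' 1 A (d+w+z) (A+z+d+w) (1+d+w+z) (A+z+d+w)); try lia; first by split; lia.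
  by rewrite e1 e5. by rewrite e5 -E.
exact: (@three_col X1 Y cs c1).
Qed.
Definition Sdc n (f : coloring 3) d (c1 cs : 'I_3) := [set i : 'I_n |
  [&& i + d < n, f 1 i.+1 == c1, f 1 (i + d).+1 == c1 & f (1 + d) (i + d).+1 == cs]].

Lemma Sdc_sidon n f d c1 cs : noL n f -> 0 < d -> sidon (Sdc n f d c1 cs).
Proof.
move=> H hd a b c e.
rewrite !inE => /and4P[ha /eqP a1 /eqP a2 /eqP a3] /and4P[hb /eqP b1 /eqP b2 /eqP b3]
  /and4P[hc /eqP c1' /eqP c2 /eqP c3] /and4P[he /eqP e1 /eqP e2 /eqP e3] ab ce ac E.
apply: (@core n f H a.+1 d (b - a) (c - a) c1 cs); try lia.
- by [].
- by rewrite -a2; congr (f _ _); lia.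
- by rewrite -b2; congr (f _ _); lia.
- by rewrite -c1'; congr (f _ _); lia.
- by rewrite -e2; congr (f _ _); lia.
- by rewrite -a3; congr (f _ _); lia.
- by rewrite -b3; congr (f _ _); lia.
- by rewrite -c3; congr (f _ _); lia.
- by rewrite -e3; congr (f _ _); lia.
Qed.

Definition Pd n (f : coloring 3) d := [set i : 'I_n |
  (i + d < n) && (f 1 i.+1 == f 1 (i + d).+1)].

Lemma sum432 : \sum_(k : 'I_3 * 'I_3) (if k.1 == k.2 then 0 else 72) = 432.
Proof. rewrite -(pair_big predT predT (fun i j => if i == j then 0 else 72)) /=.
by rewrite !big_ord_recl !big_ord0.
Qed.

Lemma Pd_432 n f d : noL n f -> 0 < d -> n <= 2593 -> #|Pd n f d| <= 432.
Proof.
move=> H hd hn.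
rewrite -sum1_card (partition_big (fun i : 'I_n => (f 1 i.+1, f (1 + d) (i + d).+1)) predT) //=.
rewrite -sum432; apply: leq_sum => -[c1 cs] _ /=.
have -> : \sum_(i in Pd n f d | (f 1 i.+1, f (1 + d) (i + d).+1) == (c1, cs)) 1
     = \sum_(i in Sdc n f d c1 cs) 1.
  apply: eq_bigl => i; rewrite !inE xpair_eqE.
  apply/idP/idP.
    by case/andP => /andP[-> /eqP <-] /andP[/eqP <- ->]; rewrite !eqxx.
  by case/and4P => -> /eqP -> /eqP -> ->; rewrite !eqxx.
rewrite sum1_card.
case: eqP => [E|_]; last by apply: sidon_card hn; apply: Sdc_sidon.
rewrite leqn0 cards_eq0; apply/eqP/setP => i; rewrite !inE.
apply/negbTE/negP => /and4P[hi /eqP a1 /eqP a2 /eqP a3].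
apply: (H 1 i.+1 d); first by split; lia.
- by rewrite a1 -a2; congr (f _ _); lia.
- by rewrite (_ : i.+1 + d = (i + d).+1) ?a2 ?a3 ?E //; lia.
Qed.

Lemma sum1_set (T : finType) (P : pred T) : \sum_(i | P i) 1 = #|[set i | P i]|.
Proof. by rewrite -sum1_card; apply: eq_bigl => i; rewrite inE. Qed.

Definition Mset n (f : coloring 3) :=
  [set p : 'I_n * 'I_n | (p.1 < p.2) && (f 1 p.1.+1 == f 1 p.2.+1)].

Lemma M_upper n f :
  #|Mset n f| <= \sum_(d < n) (if d == 0 :> nat then 0 else #|Pd n f d|).
Proof.
rewrite -sum1_card (partition_big (@dif n) predT) //=.
apply: leq_sum => d _.
case: eqP => [d0|dn0].
  rewrite leqn0; apply/eqP; apply: big_pred0 => -[a b]; rewrite inE /=.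
  apply/negbTE/negP => /andP[/andP[ab _] /eqP E].
  move: (congr1 val E) => /= E'; move: ab; lia.
rewrite sum1_set.
apply: (inj_le (h := fun p : 'I_n * 'I_n => p.1)).
  move=> [a b] [c e]; rewrite !inE /= => /andP[/andP[ab _] /eqP E1] /andP[/andP[ce _] /eqP E2] ac.
  move: (congr1 val E1) (congr1 val E2) => /= E1' E2'.
  have be : b = e by apply: ord_inj; move: E1' E2' ab ce; rewrite ac; lia.
  by rewrite ac be.
move=> [a b]; rewrite !inE /= => /andP[/andP[ab /eqP fe] /eqP E1].
move: (congr1 val E1) => /= E1'.
have -> : a + d = b by move: E1' ab; lia.
by rewrite ltn_ord fe eqxx.
Qed.

Definition k0 : 'I_3 := @Ordinal 3 0 isT.
Definition k1 : 'I_3 := @Ordinal 3 1 isT.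
Definition k2 : 'I_3 := @Ordinal 3 2 isT.

Definition Acol n (f : coloring 3) (c : 'I_3) := [set i : 'I_n | f 1 i.+1 == c].

Lemma M_lower n f :
  #|Mset n f| = #|ltp (Acol n f k0)| + #|ltp (Acol n f k1)| + #|ltp (Acol n f k2)|.
Proof.
rewrite -sum1_card (partition_big (fun p : 'I_n * 'I_n => f 1 p.1.+1) predT) //=.
rewrite !big_ord_recl big_ord0 addn0 addnA.
have E : forall c : 'I_3, \sum_(i in Mset n f | f 1 i.1.+1 == c) 1 = #|ltp (Acol n f c)|.
  move=> c; rewrite sum1_set; apply: eq_card => -[a b]; rewrite !inE /=.
  apply/idP/idP.
    by case/andP => /andP[ab /eqP <-] /eqP <-; rewrite eqxx ab.
  by case/and3P => /eqP -> /eqP -> ->; rewrite eqxx.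
rewrite !E; congr (_ + _ + _); congr #|ltp (Acol n f _)|; exact: val_inj.
Qed.

Lemma A_sum n f : #|Acol n f k0| + #|Acol n f k1| + #|Acol n f k2| = n.
Proof.
transitivity (\sum_(i : 'I_n) 1); last by rewrite sum1_card card_ord.
rewrite (partition_big (fun i : 'I_n => f 1 i.+1) predT) //=.
rewrite !big_ord_recl big_ord0 addn0 addnA.
have E : forall c : 'I_3, \sum_(i in 'I_n | f 1 i.+1 == c) 1 = #|Acol n f c|.
  by move=> c; rewrite sum1_set; apply: eq_card => i; rewrite !inE.
rewrite !E; congr (_ + _ + _); congr #|Acol n f _|; exact: val_inj.
Qed.

Lemma Pd_small n f d : #|Pd n f d| <= n - d.
Proof.
apply: (@leq_trans #|[set~ (@ord_max (n - d))]|); last by rewrite cardsC1 card_ord.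
apply: (inj_le (h := fun i : 'I_n => (inord i : 'I_(n - d).+1))).
  move=> a b; rewrite !inE => /andP[ha _] /andP[hb _] E.
  apply: ord_inj; move: (congr1 val E) => /=; rewrite !inordK //; lia.
move=> a; rewrite !inE => /andP[ha _]; apply/eqP => /(congr1 val) /=.
rewrite inordK /=; lia.
Qed.

Lemma sum_bound m f : noL m.+3 f -> m.+3 <= 2593 ->
  \sum_(d < m.+3) (if d == 0 :> nat then 0 else #|Pd m.+3 f d|) <= 432 * m + 3.
Proof.
move=> H hn.
rewrite big_ord_recl /= big_ord_recr /= big_ord_recr /= add0n.
have h1 : \sum_(i < m) #|Pd m.+3 f (bump 0 i)| <= \sum_(i < m) 432.
  apply: leq_sum => i _; apply: Pd_432 => //.
have h2 := Pd_small m.+3 f m.+1.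
have h3 := Pd_small m.+3 f m.+2.
rewrite sum_nat_const card_ord in h1.
have -> : bump 0 m = m.+1 by [].
have -> : bump 0 m.+1 = m.+2 by [].
move: h1 h2 h3; set S := \sum_(i < m) _; set X := #|Pd m.+3 f m.+1|; set Y := #|Pd m.+3 f m.+2|. move=> *. lia.
Qed.

Lemma sq3 (a0 a1 a2 : nat) : (a0 + a1 + a2) * (a0 + a1 + a2) <= 3 * (a0 * a0 + a1 * a1 + a2 * a2).
Proof.
have h1 := (nat_Cauchy a0 a1).1; have h2 := (nat_Cauchy a1 a2).1; have h3 := (nat_Cauchy a0 a2).1.
rewrite !expnS !expn0 !muln1 in h1 h2 h3.
nia.
Qed.

Lemma arith (a0 a1 a2 L0 L1 L2 M : nat) :
  M <= 432 * 2590 + 3 -> M = L0 + L1 + L2 -> a0 + a1 + a2 = 2593 ->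
  a0 * a0 <= 2 * L0 + a0 -> a1 * a1 <= 2 * L1 + a1 -> a2 * a2 <= 2 * L2 + a2 -> False.
Proof.
move=> h1 h2 h3 h4 h5 h6.
have := sq3 a0 a1 a2; rewrite h3.
lia.
Qed.

Lemma arrows2593 : arrows_L 3 2593.
Proof.
move=> f; apply: NNPP => Hno.
have H : noL 2593 f.
  move=> i j t G e1 e2; apply: Hno; exists i, j, t; split => //.
have up := M_upper 2593 f.
have sb := @sum_bound 2590 f H isT.
have lo := M_lower 2593 f.
have As := A_sum 2593 f.
apply: (arith (leq_trans up sb) lo As); exact: ltpairs_ge.
Qed.

Lemma minimal (P : nat -> Prop) : forall k j, j <= k -> P j ->
  exists r, P r /\ (forall m, m < r -> ~ P m) /\ r <= j.
Proof.
elim=> [|k IH] j hj Pj.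
  exists j; split => //; split => // m hm; move: hj hm; lia.
case: (classic (exists m, m < j /\ P m)) => [[m [hm Pm]]|hn].
  have [r [Pr [hr rm]]] := IH m ltac:(lia) Pm.
  exists r; split => //; split => //; lia.
exists j; split => //; split => // m hm Pm; apply: hn; by exists m.
Qed.

Lemma L_mono n m (f : coloring 3) : n <= m -> has_mono_L n f -> has_mono_L m f.
Proof.
move=> hnm [i [j [t [[h1 h2 h3 h4 h5] e]]]]; exists i, j, t; split => //.
split => //; lia.
Qed.

Definition tbl : seq (seq nat) := [:: [:: 0; 1; 2; 0; 1; 2; 0; 0; 1; 2; 0; 1; 2; 0; 1; 2; 2; 0; 1; 2];
  [:: 0; 0; 1; 2; 0; 1; 2; 1; 1; 2; 0; 1; 2; 0; 1; 2; 0; 2; 0; 2];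
  [:: 2; 2; 2; 0; 1; 2; 0; 1; 2; 0; 1; 2; 0; 1; 2; 0; 1; 0; 1; 2];
  [:: 2; 0; 1; 1; 2; 0; 1; 2; 0; 1; 2; 0; 1; 2; 0; 1; 2; 1; 2; 0];
  [:: 0; 0; 1; 2; 1; 0; 1; 2; 2; 1; 1; 0; 0; 2; 2; 0; 1; 1; 2; 0];
  [:: 2; 2; 1; 0; 1; 0; 2; 0; 1; 2; 2; 0; 1; 0; 1; 2; 2; 2; 0; 1];
  [:: 1; 0; 0; 1; 2; 0; 2; 0; 1; 0; 1; 2; 2; 1; 2; 0; 0; 0; 1; 2];
  [:: 2; 1; 1; 0; 0; 1; 2; 1; 2; 0; 2; 0; 0; 2; 2; 1; 1; 1; 2; 0];
  [:: 1; 0; 0; 2; 2; 1; 0; 1; 0; 1; 0; 1; 2; 0; 0; 2; 2; 2; 0; 1];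
  [:: 0; 1; 2; 2; 1; 1; 1; 2; 0; 2; 1; 2; 0; 0; 1; 2; 0; 0; 1; 2];
  [:: 1; 2; 1; 0; 1; 2; 0; 0; 1; 2; 2; 2; 1; 1; 0; 1; 0; 1; 2; 0];
  [:: 1; 1; 1; 2; 2; 0; 0; 2; 0; 0; 1; 1; 2; 2; 0; 1; 0; 2; 0; 1];
  [:: 1; 0; 2; 1; 0; 2; 1; 2; 1; 2; 2; 0; 0; 0; 1; 2; 1; 0; 1; 2];
  [:: 2; 1; 0; 1; 1; 2; 1; 0; 2; 1; 0; 1; 2; 2; 0; 0; 1; 1; 2; 1];
  [:: 0; 2; 1; 1; 0; 1; 0; 1; 2; 1; 0; 2; 0; 1; 1; 1; 0; 2; 0; 1];
  [:: 2; 0; 0; 0; 2; 0; 2; 0; 1; 1; 0; 2; 2; 2; 0; 0; 1; 0; 1; 2];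
  [:: 2; 2; 1; 2; 0; 0; 2; 2; 0; 0; 2; 1; 1; 0; 1; 2; 2; 1; 2; 0];
  [:: 1; 0; 1; 1; 1; 2; 0; 1; 2; 2; 1; 1; 0; 1; 2; 0; 1; 2; 0; 1];
  [:: 0; 1; 1; 0; 2; 1; 0; 2; 2; 0; 2; 0; 0; 0; 2; 1; 2; 2; 1; 2];
  [:: 1; 1; 0; 0; 0; 2; 1; 2; 1; 0; 0; 2; 1; 2; 2; 1; 1; 0; 1; 0]].

Definition f20 : coloring 3 := fun i j =>
  @Ordinal 3 (nth 0 (nth [::] tbl i.-1) j.-1 %% 3) (@ltn_pmod _ 3 isT).

Definition chk : bool :=
  all (fun i => all (fun j => all (fun t =>
     ~~ ((i + t <= 20) && (j + t <= 20) &&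
         (f20 i j == f20 i (j + t)) && (f20 i (j + t) == f20 (i + t) (j + t))))
     (iota 1 20)) (iota 1 20)) (iota 1 20).

Lemma chk_true : chk = true.
Proof. vm_compute. reflexivity. Qed.

Lemma f20_ok : ~ has_mono_L 20 f20.
Proof.
move=> [i [j [t [[h1 h2 h3 h4 h5] [e1 e2]]]]].
have := chk_true; rewrite /chk => /allP /(_ i) H.
have /allP /(_ j) H' : all (fun j => all (fun t =>
     ~~ ((i + t <= 20) && (j + t <= 20) &&
         (f20 i j == f20 i (j + t)) && (f20 i (j + t) == f20 (i + t) (j + t))))
     (iota 1 20)) (iota 1 20).
  by apply: H; rewrite mem_iota; lia.
have /allP /(_ t) : all (fun t =>
     ~~ ((i + t <= 20) && (j + t <= 20) &&
         (f20 i j == f20 i (j + t)) && (f20 i (j + t) == f20 (i + t) (j + t))))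
     (iota 1 20).
  by apply: H'; rewrite mem_iota; lia.
have -> : t \in iota 1 20 by rewrite mem_iota; lia.
by rewrite h4 h5 e1 e2 !eqxx => /(_ isT).
Qed.

Theorem theorem3p1 :
  (exists r, is_RcL 3 r /\ 21 <= r <= 2593) /\
  (exists f : coloring 3, ~ has_mono_L 20 f).
Proof.
split; last by exists f20; exact: f20_ok.
have [r [Ar [Hm hr]]] := @minimal (arrows_L 3) 2593 2593 (leqnn _) arrows2593.
exists r; split; first by split.
rewrite hr andbT ltnNge; apply/negP => hr20.
by apply: f20_ok; apply: (L_mono hr20); apply: Ar.
Qed.
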